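(* Let $W$ be an $n\times n$ row-stochastic matrix with node set $V=\{1,\dots,n\}$, and let $M\subseteq V$ be a nonempty cohesive set. Then exactly one of the following holds: (a) $\mathrm{Expansion}(M)=V$; (b) both $\mathrm{Expansion}(M)$ and $V\setminus\mathrm{Expansion}(M)$ are nonempty maximal cohesive sets.
   Context: A matrix $W=(w_{ij})_{n\times n}$ is row-stochastic if $w_{ij}\ge 0$ for all $i,j$ and $\sum_{j=1}^n w_{ij}=1$ for every $i$. A set $M\subseteq V$ is cohesive if $\sum_{j\in M} w_{ij}\ge 1/2$ for every $i\in M$. A cohesive set $M$ is maximal cohesive if there is no $i\in V\setminus M$ with $\sum_{j\in M} w_{ij}>1/2$. The cohesive expansion of $M\subseteq V$ is produced by the following procedure. Set $M_0=M$. For $k=0,1,2,\dots$: if there exists $i\in V\setminus M_k$ with $\sum_{j\in M_k} w_{ij}>1/2$, choose any such $i$ and set $M_{k+1}=M_k\cup\{i\}$. If no such $i$ exists, stop and output $M_k$. The output is denoted $\mathrm{Expansion}(M)$. It does not depend on the choices made. *)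

(* Defs.v *)
From HB Require Import structures.
From mathcomp Require Import all_boot all_order all_algebra.
Set Implicit Arguments. Unset Strict Implicit. Unset Printing Implicit Defensive.
Import Order.TTheory GRing.Theory Num.Theory.
Local Open Scope ring_scope.

Section Defs.
Variables (R : realFieldType) (n : nat).
Implicit Types (W : 'M[R]_n) (M : {set 'I_n}).

Definition row_stochastic W : Prop :=
  (forall i j, 0 <= W i j) /\ (forall i, \sum_(j < n) W i j = 1).

Definition wsum W (i : 'I_n) M : R := \sum_(j in M) W i j.

Definition cohesive W M : Prop :=
  forall i, i \in M -> 1 / 2%:R <= wsum W i M.

Definition maximal_cohesive W M : Prop :=
  cohesive W M /\ ~ (exists i, i \notin M /\ 1 / 2%:R < wsum W i M).

Definition expansion_step W M : {set 'I_n} :=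
  match [pick i | (i \notin M) && (1 / 2%:R < wsum W i M)] with
  | Some i => i |: M
  | None => M
  end.

(* Each effective step adds a new node, so after n steps the procedure has
   stopped (further steps are identity). *)
Definition Expansion W M : {set 'I_n} := iter n (expansion_step W) M.
End Defs.

(* Main.v *)
Require Import Defs.
From HB Require Import structures.
From mathcomp Require Import all_boot all_order all_algebra.
Import Order.TTheory GRing.Theory Num.Theory.
Local Open Scope ring_scope.
From mathcomp Require Import lra.
Set Implicit Arguments.

Section S.
Variables (R : realFieldType) (n : nat) (W : 'M[R]_n).
Hypothesis HW : row_stochastic W.

Lemma wsumC i (A : {set 'I_n}) : wsum W i A + wsum W i (~: A) = 1.
Proof.
rewrite /wsum -(proj2 HW i) [RHS](bigID (fun j => j \in A)) /=.
by congr (_ + _); apply: eq_bigl => j; rewrite inE.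
Qed.

Lemma wsum_sub i (A B : {set 'I_n}) : A \subset B -> wsum W i A <= wsum W i B.
Proof.
move=> sAB; rewrite /wsum [X in _ <= X](bigID (fun j => j \in A)) /=.
have -> : \sum_(j in B | j \in A) W i j = \sum_(j in A) W i j.
  by apply: eq_bigl => j; rewrite andb_idl // => /(subsetP sAB).
by rewrite lerDl sumr_ge0 // => j _; apply: (proj1 HW).
Qed.

Lemma step_sub (X : {set _}) : X \subset expansion_step W X.
Proof. rewrite /expansion_step; case: pickP => [i _|_] //; exact: subsetUr. Qed.

Lemma step_coh (X : {set _}) : cohesive W X -> cohesive W (expansion_step W X).
Proof.
rewrite /expansion_step; case: pickP => [i /andP[_ Hi]|_] // HX j.
have sub := subsetUr [set i] X.
rewrite !inE => /orP[/eqP->|jX].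
  by apply: ltW; apply: lt_le_trans Hi (wsum_sub _ sub).
exact: le_trans (HX j jX) (wsum_sub _ sub).
Qed.

Lemma step_fix_or (X : {set _}) : expansion_step W X = X \/
  (#|expansion_step W X| = #|X|.+1)%N.
Proof.
rewrite /expansion_step; case: pickP => [i /andP[Hi _]|_]; last by left.
by right; rewrite cardsU1 Hi.
Qed.

Lemma iter_inv (X : {set 'I_n}) k :
  expansion_step W (iter k (expansion_step W) X) = iter k (expansion_step W) X
  \/ (#|iter k (expansion_step W) X| = #|X| + k)%N.
Proof.
elim: k => [|k IH]; first by right; rewrite addn0.
rewrite !iterS; case: IH => [E | Hc]; first by left; rewrite !E.
case: (step_fix_or (iter k (expansion_step W) X)) => [E|->]; first by left; rewrite !E.
by right; rewrite Hc addnS.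
Qed.

Lemma E_fix (X : {set _}) : X != set0 -> expansion_step W (Expansion W X) = Expansion W X.
Proof.
move=> HX; case: (iter_inv X n) => // Hc.
have := max_card (mem (Expansion W X)); rewrite card_ord /Expansion Hc.
have : (0 < #|X|)%N by rewrite card_gt0.
move=> h1 h2; exfalso; move: h2; rewrite leqNgt; move/negP; apply.
by rewrite -{1}(add0n n) ltn_add2r.
Qed.

Lemma iter_sub (X : {set 'I_n}) k : X \subset iter k (expansion_step W) X.
Proof.
elim: k => // k IH; rewrite iterS.
exact: subset_trans IH (step_sub _).
Qed.
Lemma E_sub (X : {set _}) : X \subset Expansion W X.
Proof. exact: iter_sub. Qed.

Lemma E_coh (X : {set _}) : cohesive W X -> cohesive W (Expansion W X).
Proof. move=> HX; rewrite /Expansion.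
have : forall k, cohesive W (iter k (expansion_step W) X).
  by elim=> // k IH; rewrite iterS; apply: step_coh.
by apply. Qed.

Lemma fix_no (X : {set _}) : expansion_step W X = X -> ~ (exists i, i \notin X /\ 1 / 2%:R < wsum W i X).
Proof.
rewrite /expansion_step; case: pickP => [i /andP[Hi _]|Hn].
  move=> E; exfalso; move: Hi; rewrite -{1}E; by rewrite setU11.
by move=> _ [i [Hi Hw]]; have := Hn i; rewrite Hi Hw.
Qed.
End S.

Theorem lemmaA1 (R : realFieldType) (n : nat) (W : 'M[R]_n) (M : {set 'I_n})
  (HW : row_stochastic W) (HM0 : M != set0) (HM : cohesive W M) :
  let E := Expansion W M in
  (E = [set: 'I_n] /\
     ~ (E != set0 /\ ~: E != set0 /\ maximal_cohesive W E /\ maximal_cohesive W (~: E)))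
  \/
  (E <> [set: 'I_n] /\
     (E != set0 /\ ~: E != set0 /\ maximal_cohesive W E /\ maximal_cohesive W (~: E))).
Proof.
move=> E.
have Efix := @fix_no _ _ W E (E_fix _ W _ HM0 : expansion_step W E = E).
have Ecoh : cohesive W E := E_coh HW HM.
have sME : M \subset E := E_sub _ W M.
have half : 1 / 2%:R + 1 / 2%:R = 1 :> R.
  by rewrite -mulrDl -(natrD R 1 1) divff // pnatr_eq0.
case: (eqVneq E [set: 'I_n]) => HE.
  left; split => // -[_ [H _]]; move: H; by rewrite HE setCT eqxx.
right; split; first exact/eqP.
have E0 : E != set0.
  apply/negP => /eqP E0; move: HM0; by rewrite -subset0 -E0 sME.
have CE0 : ~: E != set0.
  by apply/negP => /eqP h; move/negP: HE; apply; rewrite -[E]setCK h setC0.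
split => //; split => //; split; first by split.
split.
  move=> i; rewrite inE => iE.
  have h1 := wsumC HW i E.
  have h2 : ~ (1 / 2%:R < wsum W i E) by move=> h; apply: Efix; exists i.
  move/negP: h2; rewrite -leNgt => h2.
  have -> : wsum W i (~: E) = 1 - wsum W i E by rewrite -h1 addrC addKr.
  lra.
move=> [i [iE h]]; move: iE; rewrite inE negbK => iE.
have h1 := wsumC HW i E; have h2 := Ecoh i iE.
lra.
Qed.
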